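(* Let $(\mathcal{R},\mu)$ be resonant, let $\|\cdot\|_X$ be an r.i. quasi-Banach function norm on $\mathcal{M}(\mathcal{R},\mu)$ satisfying (P5), and let $\|\cdot\|_{\overline{X}}$ be the r.i. quasi-Banach function norm on $\mathcal{M}([0,\infty),\lambda)$ constructed as in the context (it also satisfies (P5)). Denote by $\|\cdot\|_{X'}$ and $\|\cdot\|_{(\overline{X})'}$ the associate norms of $\|\cdot\|_X$ and $\|\cdot\|_{\overline{X}}$, respectively. Then for every $f\in\mathcal{M}(\mathcal{R},\mu)$, $$\|f\|_{X'}=\|f^*\|_{(\overline{X})'}.$$
   Context: Let $(\mathcal{R},\mu)$ be a $\sigma$-finite measure space; $\mathcal{M}$ denotes the $\mu$-measurable extended complex-valued functions (identified a.e.), $\mathcal{M}_+$ the non-negative ones. $f_*(s)=\mu(\{|f|>s\})$, $f^*(t)=\inf\{s\ge0;\,f_*(s)\le t\}$ (non-increasing rearrangement). $(\mathcal{R},\mu)$ is called resonant if it is either non-atomic or completely atomic with all atoms of equal measure. A quasi-Banach function norm is a map $\|\cdot\|:\mathcal{M}\to[0,\infty]$ with $\|f\|=\||f|\|$ such that on $\mathcal{M}_+$: (Q1) $\|af\|=|a|\|f\|$, $\|f\|=0\iff f=0$ a.e., and there is $C\ge1$ (modulus of concavity) with $\|f+g\|\le C(\|f\|+\|g\|)$; (P2) $f\le g$ a.e. implies $\|f\|\le\|g\|$; (P3) $f_n\uparrow f$ a.e. implies $\|f_n\|\uparrow\|f\|$; (P4) $\|\chi_E\|<\infty$ whenever $\mu(E)<\infty$.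 Property (P5): for every $E$ with $\mu(E)<\infty$ there is $C_E<\infty$ with $\int_E f\,d\mu\le C_E\|f\|$ for all $f\in\mathcal{M}_+$. The norm is rearrangement-invariant (r.i.) if $\|f\|=\|g\|$ whenever $f^*=g^*$. For an r.i. quasi-Banach function norm $\|\cdot\|_X$ satisfying (P5), its associate norm is $\|f\|_{X'}=\sup\{\int_0^\infty f^*g^*\,d\lambda;\ \|g\|_X\le1\}$. Construction of $\|\cdot\|_{\overline{X}}$: (i) If $(\mathcal{R},\mu)$ is non-atomic, fix a measure-preserving map $\sigma$ from $(\mathcal{R},\mu)$ onto $[0,\mu(\mathcal{R}))$ (with Lebesgue measure $\lambda$), and for $h\in\mathcal{M}([0,\mu(\mathcal{R})),\lambda)$ put $\|h\|_{\overline{X_0}}=\|h\circ\sigma\|_X$. (ii) If $(\mathcal{R},\mu)$ is completely atomic with all atoms of measure $\beta\in(0,\infty)$, fix an enumeration $(e_n)_{n\in\mathcal{N}}$ of the atoms, $\mathcal{N}=\{n\in\mathbb{N};\,\beta n<\mu(\mathcal{R})\}$ ($0\in\mathbb{N}$), define $T(h)(e_n)=\beta^{-1}\int_{\beta n}^{\beta(n+1)}h^*\,d\lambda$ for $n\in\mathcal{N}$, and put $\|h\|_{\overline{X_0}}=\|T(h)\|_X$. In both cases define, for $f\in\mathcal{M}([0,\infty),\lambda)$, $\|f\|_{\overline{X}}=\|f^*\chi_{[0,\mu(\mathcal{R}))}\|_{\overline{X_0}}$. *)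

(* Defs.v *)
From HB Require Import structures.
From mathcomp Require Import all_boot all_order all_algebra.
From mathcomp Require Import all_classical all_reals all_analysis.
From mathcomp Require Import measurable_realfun.
Set Implicit Arguments. Unset Strict Implicit. Unset Printing Implicit Defensive.
Import Order.TTheory GRing.Theory Num.Theory.
Local Open Scope classical_set_scope.
Local Open Scope ring_scope.
Local Open Scope ereal_scope.

Section RIdefs.
Context {R : realType} {d : measure_display} {T : measurableType d}.

Definition distrib (mu : set T -> \bar R) (f : T -> \bar R) (s : R) : \bar R :=
  mu [set x | s%:E < `|f x|].

Definition rearr (mu : set T -> \bar R) (f : T -> \bar R) (t : R) : \bar R :=
  ereal_inf [set s%:E | s in [set s : R | (0 <= s)%R /\ distrib mu f s <= t%:E]].

Definition nonnegf (f : T -> \bar R) := forall x, 0 <= f x.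

Definition qBFN (mu : {measure set T -> \bar R}) (N : (T -> \bar R) -> \bar R) :=
  (forall f, N f = N (fun x => `|f x|)) /\
      (forall (a : R) (f : T -> \bar R), measurable_fun setT f -> nonnegf f ->
          N (fun x => a%:E * f x) = `|a|%:E * N f) /\
      (forall f : T -> \bar R, measurable_fun setT f -> nonnegf f ->
          (N f = 0 <-> {ae mu, forall x, f x = 0})) /\
      (exists C : R, (1 <= C)%R /\
          forall f g : T -> \bar R, measurable_fun setT f -> nonnegf f ->
            measurable_fun setT g -> nonnegf g ->
            N (fun x => f x + g x) <= C%:E * (N f + N g)) /\
      (forall f g : T -> \bar R, measurable_fun setT f -> nonnegf f ->
          measurable_fun setT g -> nonnegf g ->
          {ae mu, forall x, f x <= g x} -> N f <= N g) /\
      (forall (F : (T -> \bar R)^nat) f,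
          (forall n, measurable_fun setT (F n) /\ nonnegf (F n)) ->
          measurable_fun setT f -> nonnegf f ->
          {ae mu, forall x, nondecreasing_seq (fun n => F n x) /\
                            (fun n => F n x) @ \oo --> f x} ->
          nondecreasing_seq (fun n => N (F n)) /\ (fun n => N (F n)) @ \oo --> N f) /\
      (forall E, measurable E -> mu E < +oo -> N (fun x => (\1_E x)%:E) < +oo).

Definition P5 (mu : {measure set T -> \bar R}) (N : (T -> \bar R) -> \bar R) :=
  forall E, measurable E -> mu E < +oo ->
    exists C : R, forall f : T -> \bar R, measurable_fun setT f -> nonnegf f ->
      \int[mu]_(x in E) f x <= C%:E * N f.

Definition rearr_inv (mu : {measure set T -> \bar R}) (N : (T -> \bar R) -> \bar R) :=
  forall f g : T -> \bar R, measurable_fun setT f -> measurable_fun setT g ->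
    (forall t : R, (0 <= t)%R -> rearr mu f t = rearr mu g t) -> N f = N g.

Definition assoc_norm (mu : {measure set T -> \bar R}) (N : (T -> \bar R) -> \bar R)
    (f : T -> \bar R) : \bar R :=
  ereal_sup [set \int[lebesgue_measure]_(t in `[0%R, +oo[) (rearr mu f t * rearr mu g t)
            | g in [set g | measurable_fun setT g /\ N g <= 1]].

Definition atom (mu : {measure set T -> \bar R}) (A : set T) :=
  [/\ measurable A, 0 < mu A &
      forall B, measurable B -> B `<=` A -> mu B = 0 \/ mu (A `\` B) = 0].

Definition nonatomic (mu : {measure set T -> \bar R}) := forall A, ~ atom mu A.

Definition atom_index (mu : {measure set T -> \bar R}) (beta : R) : set nat :=
  [set n | (beta * n%:R)%:E < mu setT].

Definition atom_enum (mu : {measure set T -> \bar R}) (beta : R) (e : nat -> set T) :=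
  [/\ (0 < beta)%R,
      (forall n, atom_index mu beta n -> atom mu (e n) /\ mu (e n) = beta%:E),
      trivIset (atom_index mu beta) e &
      \bigcup_(n in atom_index mu beta) e n = setT].

Definition completely_atomic_eq (mu : {measure set T -> \bar R}) :=
  exists beta e, atom_enum mu beta e.

Definition resonant (mu : {measure set T -> \bar R}) :=
  nonatomic mu \/ completely_atomic_eq mu.

End RIdefs.

Lemma measurable_Ige0 (R : realType) :
  measurable (`[0%R, +oo[ : set (measurableTypeR R)).
Proof. exact: measurable_itv. Qed.

(* Lebesgue measure on [0,oo): functions on [0,oo) are represented as functions
   on R, with the Lebesgue measure restricted to [0,oo) *)
Definition lam0 (R : realType) : {measure set (measurableTypeR R) -> \bar R} :=
  mrestr lebesgue_measure (@measurable_Ige0 R).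

Definition Iset (R : realType) (m : \bar R) : set R :=
  [set t : R | (0 <= t)%R /\ t%:E < m].

Section Construction.
Context {R : realType} {d : measure_display} {T : measurableType d}.

Definition measure_preserving_onto (mu : {measure set T -> \bar R})
    (sigma : T -> measurableTypeR R) :=
  [/\ measurable_fun setT sigma,
      sigma @` setT = Iset (mu setT) &
      forall B : set (measurableTypeR R), measurable B ->
        mu (sigma @^-1` B) = lebesgue_measure (B `&` Iset (mu setT))].

(* atomic case: T(h)(e_n) = beta^{-1} int_{beta n}^{beta(n+1)} h^* ,
   h being regarded as a function on [0, mu(R)) *)
Definition Tmap (mu : {measure set T -> \bar R}) (beta : R) (e : nat -> set T)
    (h : measurableTypeR R -> \bar R) : T -> \bar R :=
  fun x => \sum_(n <oo | `[< atom_index mu beta n >])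
    ((\1_(e n) x)%:E * ((beta^-1)%:E *
      \int[lebesgue_measure]_(t in `[(beta * n%:R)%R, (beta * n.+1%:R)%R])
         rearr (lam0 R) (fun s => h s * (\1_(Iset (mu setT)) s)%:E) t)).

Definition is_Xbar0 (mu : {measure set T -> \bar R}) (N : (T -> \bar R) -> \bar R)
    (NX0 : (measurableTypeR R -> \bar R) -> \bar R) :=
  (nonatomic mu /\ exists sigma, measure_preserving_onto mu sigma /\
      forall h, NX0 h = N (h \o sigma))
  \/ (exists beta e, atom_enum mu beta e /\ forall h, NX0 h = N (Tmap mu beta e h)).

End Construction.

Definition Xbar (R : realType) (m : \bar R)
    (NX0 : (measurableTypeR R -> \bar R) -> \bar R)
    (f : measurableTypeR R -> \bar R) : \bar R :=
  NX0 (fun t => rearr (lam0 R) f t * (\1_(Iset m) t)%:E).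

(* Main.v *)
Require Import Defs.
From HB Require Import structures.
From mathcomp Require Import all_boot all_order all_algebra.
From mathcomp Require Import all_classical all_reals all_analysis.
From mathcomp Require Import measurable_realfun.
Import Order.TTheory GRing.Theory Num.Theory.
Local Open Scope classical_set_scope.
Local Open Scope ring_scope.
Local Open Scope ereal_scope.
Section Gen.
Context {R : realType} {d : measure_display} {T : measurableType d}.
Variable mu : {measure set T -> \bar R}.

Lemma rearr_ge0 (f : T -> \bar R) t : 0 <= rearr mu f t.
Proof. by apply/ereal_infP => _ [s [s0 _] <-]; rewrite lee_fin. Qed.

Lemma rearr_nonincr (f : T -> \bar R) t t' : (t <= t')%R -> rearr mu f t' <= rearr mu f t.
Proof.
move=> tt'; apply: le_ereal_inf => _ [s [s0 Ds] <-]; exists s => //; split => //.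
by apply: (le_trans Ds); rewrite lee_fin.
Qed.

Lemma rearr_le (f : T -> \bar R) t s : (0 <= s)%R -> distrib mu f s <= t%:E ->
  rearr mu f t <= s%:E.
Proof. by move=> s0 Ds; apply: ge_ereal_inf; exists s%:E => //; exists s. Qed.
Arguments rearr_le [f t s].

Lemma rearr0 (f : T -> \bar R) t : distrib mu f 0 <= t%:E -> rearr mu f t = 0.
Proof. by move=> D0; apply/eqP; rewrite eq_le rearr_ge0 rearr_le. Qed.

Lemma mset (f : T -> \bar R) (s : R) : measurable_fun setT f ->
  measurable [set x | s%:E < `|f x|].
Proof.
move=> mf; have := emeasurable_fun_o_infty measurableT
  (measurableT_comp (@abse_measurable _ setT) mf) s%:E.
by rewrite setTI.
Qed.

Lemma distrib_ge0 (f : T -> \bar R) s : 0 <= distrib mu f s.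
Proof. exact: measure_ge0. Qed.

Lemma rearr_gtP (f : T -> \bar R) (s t : R) : measurable_fun setT f -> (0 <= s)%R ->
  (s%:E < rearr mu f t) <-> (t%:E < distrib mu f s).
Proof.
move=> mf s0; split.
  move=> H; rewrite ltNge; apply/negP => Hle.
  by have := rearr_le s0 Hle; rewrite leNgt H.
move=> Ht.
pose A n := [set x | (s + n.+1%:R^-1)%:E < `|f x|].
have mA n : measurable (A n) by exact: mset.
have UA : \bigcup_n A n = [set x | s%:E < `|f x|].
  apply/seteqP; split => x /=.
    by move=> [n _]; apply: le_lt_trans; rewrite lee_fin lerDl.
  case E : (f x) => [r| |] /=.
  - rewrite lte_fin => /ltr_add_invr [k hk]; exists k => //.
    by rewrite /A /= E /= lte_fin.
  - by move=> _; exists 0%N => //; rewrite /A /= E /= ltey.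
  - by move=> _; exists 0%N => //; rewrite /A /= E /= ltey.
have ndA : nondecreasing_seq A.
  move=> n m nm; apply/subsetPset => x; rewrite /A /=; apply: le_lt_trans.
  by rewrite lee_fin lerD2l lef_pV2 ?posrE // ler_nat ltnS.
have mU : measurable (\bigcup_n A n) by rewrite UA; exact: mset.
have cv := nondecreasing_cvg_mu (mu:=mu) mA mU ndA.
have [n Hn] : exists n, t%:E < mu (A n).
  apply/not_existsP => /(_ _) H.
  have : distrib mu f s <= t%:E.
    rewrite /distrib -UA -(cvg_lim _ cv) //; apply: lime_le.
      by apply/cvg_ex; eexists; exact: cv.
    by apply: nearW => n /=; rewrite leNgt; apply/negP; exact: H.
  by rewrite leNgt Ht.
apply: (@lt_le_trans _ _ (s + n.+1%:R^-1)%:E).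
  by rewrite lte_fin ltrDl invr_gt0.
apply/ereal_infP => _ [s' [s'0 Ds'] <-]; rewrite lee_fin.
rewrite leNgt; apply/negP => Hs'.
have : mu (A n) <= distrib mu f s'.
  apply: le_measure; rewrite ?inE //; first exact: mset.
  by move=> x; rewrite /A /= => H; apply: lt_trans H; rewrite lte_fin.
by move=> H; have := le_trans H Ds'; rewrite leNgt Hn.
Qed.

End Gen.
Lemma lebIco {R : realType} (a : \bar R) : 0 <= a ->
  lebesgue_measure [set t : R | (0 <= t)%R /\ t%:E < a] = a.
Proof.
case: a => [r| |] //= a0.
- rewrite (_ : [set t | _] = `[0%R, r[%classic); last first.
    apply/seteqP; split => t /=; rewrite in_itv /= lte_fin.
      by move=> [-> ->].
    by move=> /andP[-> ->].
  rewrite lebesgue_measure_itv /= lte_fin oppr0 adde0.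
  by move: a0; rewrite lee_fin le_eqVlt => /orP[/eqP<-|->] //; rewrite ltxx.
- rewrite (_ : [set t | _] = `[0%R, +oo[%classic); last first.
    apply/seteqP; split => t /=; rewrite in_itv /= ?andbT.
      by move=> [].
    by move=> ->; rewrite ltey.
  by rewrite lebesgue_measure_itv /= ltey.
Qed.

Lemma lam0E {R : realType} (A : set R) :
  lam0 R A = lebesgue_measure (A `&` `[0%R, +oo[).
Proof. by []. Qed.

Lemma rearr_distribE {R : realType} {d1 d2 : measure_display}
  {T1 : measurableType d1} {T2 : measurableType d2}
  (mu1 : set T1 -> \bar R) (mu2 : set T2 -> \bar R) f g :
  (forall s, (0 <= s)%R -> distrib mu1 f s = distrib mu2 g s) ->
  rearr mu1 f = rearr mu2 g.
Proof.
move=> H; apply/funext => t; rewrite /rearr; congr ereal_inf.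
by apply/seteqP; split => _ [s [s0 Ds] <-]; exists s => //; split => //;
  rewrite ?H // -H.
Qed.

Lemma rearr_distribE_at {R : realType} {d1 d2 : measure_display}
  {T1 : measurableType d1} {T2 : measurableType d2}
  (mu1 : set T1 -> \bar R) (mu2 : set T2 -> \bar R) f g t :
  (forall s, (0 <= s)%R -> (distrib mu1 f s <= t%:E <-> distrib mu2 g s <= t%:E)) ->
  rearr mu1 f t = rearr mu2 g t.
Proof.
move=> H; rewrite /rearr; congr ereal_inf.
by apply/seteqP; split => _ [s [s0 Ds] <-]; exists s => //; split => //;
  apply/H.
Qed.

Section Gen2.
Context {R : realType} {d : measure_display} {T : measurableType d}.
Variable mu : {measure set T -> \bar R}.

Lemma distrib_rearr (f : T -> \bar R) s : measurable_fun setT f -> (0 <= s)%R ->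
  distrib (lam0 R) (rearr mu f) s = distrib mu f s.
Proof.
move=> mf s0; rewrite /distrib lam0E.
rewrite (_ : _ `&` _ = [set t | (0 <= t)%R /\ t%:E < distrib mu f s]).
  exact/lebIco/distrib_ge0.
apply/seteqP; split => t /=; rewrite in_itv /= andbT gee0_abs ?rearr_ge0 //.
  by move=> [/(rearr_gtP mu f s t mf s0) H ->].
by move=> [-> /(rearr_gtP mu f s t mf s0) H].
Qed.

Lemma rearr_rearr (f : T -> \bar R) : measurable_fun setT f ->
  rearr (lam0 R) (rearr mu f) = rearr mu f.
Proof. by move=> mf; apply: rearr_distribE => s s0; rewrite distrib_rearr. Qed.

End Gen2.

Lemma noninc_meas {R : realType} (F : R -> \bar R) : (forall t, 0 <= F t) ->
  (forall x y, (x <= y)%R -> F y <= F x) -> measurable_fun setT F.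
Proof.
move=> F0 Fni.
pose g m t := fine (Order.min (F t) m%:R%:E).
have gfin m t : Order.min (F t) m%:R%:E \is a fin_num.
  rewrite ge0_fin_numE; last by rewrite le_min F0 /= lee_fin.
  by rewrite gt_min; apply/orP; right; rewrite ltry.
apply: (emeasurable_fun_cvg (fun m t => (g m t)%:E)).
  move=> m; apply: measurableT_comp => //; apply: nonincreasing_measurable => //.
  move=> x y xy; apply: fine_le; rewrite ?inE ?gfin //.
  by apply: le_min2 => //; apply: Fni.
move=> t _; case E : (F t) => [r| |].
- apply: cvg_near_cst; near=> m.
  rewrite /g E; suff -> : Order.min r%:E m%:R%:E = r%:E by [].
  apply/min_idPl; rewrite lee_fin.
  near: m; exists (Num.trunc r).+1 => // m /= hm.
  apply: (le_trans (ltW (truncnS_gt r))).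
  by rewrite ler_nat.
- have -> : (fun m => (g m t)%:E) = (fun m => m%:R%:E).
    by apply/funext => m; rewrite /g E.
  by apply/cvgenyP.
- by have := F0 t; rewrite E.
Unshelve. all: by end_near. Qed.
Lemma rearr_big {R : realType} {d : measure_display} {T : measurableType d}
  (mu : {measure set T -> \bar R}) (f : T -> \bar R) (t : R) :
  measurable_fun setT f -> mu setT <= t%:E -> rearr mu f t = 0.
Proof.
move=> mf H; apply: rearr0; apply: le_trans H; apply: le_measure; rewrite ?inE //.
exact: mset.
Qed.

Lemma meas_rearr {R : realType} {d : measure_display} {T : measurableType d}
  (mu : {measure set T -> \bar R}) (f : T -> \bar R) :
  measurable_fun setT (rearr mu f).
Proof.
apply: noninc_meas => [t|x y xy]; [exact: rearr_ge0|exact: rearr_nonincr].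
Qed.

Lemma mIset {R : realType} (m : \bar R) : measurable (Iset m).
Proof.
case: m => [r| |].
- rewrite (_ : Iset _ = `[0%R, r[%classic) //.
  apply/seteqP; split => t; rewrite /Iset /= in_itv /= lte_fin.
    by move=> [-> ->].
  by move=> /andP[-> ->].
- rewrite (_ : Iset _ = `[0%R, +oo[%classic) //.
  apply/seteqP; split => t; rewrite /Iset /= in_itv /= ?andbT.
    by move=> [].
  by move=> ->; rewrite ltry.
- rewrite (_ : Iset _ = set0) //.
  by apply/seteqP; split => t //= [_]; rewrite ltNge leNye.
Qed.

Lemma meas_chi {R : realType} (m : \bar R) (H : R -> \bar R) :
  measurable_fun setT H -> measurable_fun setT (fun s => H s * (\1_(Iset m) s)%:E).
Proof.
move=> mH; apply: emeasurable_funM => //.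
apply/measurable_EFinP; exact: measurable_indic (mIset m).
Qed.

Lemma chiset {R : realType} (I : set R) (H : R -> \bar R) (s : R) :
  (0 <= s)%R -> (forall u, 0 <= H u) ->
  [set u | s%:E < `|H u * (\1_I u)%:E|] = I `&` [set u | s%:E < H u].
Proof.
move=> s0 H0; apply/seteqP; split => u /=; rewrite indicE.
  case: (boolP (u \in I)) => [/set_mem uI|uI] /=.
    by rewrite mule1 gee0_abs.
  by rewrite mule0 abse0 lte_fin ltNge s0.
by move=> [uI]; rewrite mem_set //= mule1 gee0_abs.
Qed.

Lemma Iset_sub {R : realType} (m : \bar R) : Iset m `<=` `[0%R, +oo[.
Proof. by move=> t [t0 _] /=; rewrite in_itv /= t0. Qed.

Lemma rearr_chi {R : realType} (m : \bar R) (h : R -> \bar R) (t : R) :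
  measurable_fun setT h -> 0 <= m -> (0 <= t)%R -> t%:E < m ->
  rearr (lam0 R) (fun s => rearr (lam0 R) h s * (\1_(Iset m) s)%:E) t =
  rearr (lam0 R) h t.
Proof.
move=> mh m0 t0 tm; apply: rearr_distribE_at => s s0.
rewrite /distrib lam0E chiset //; last by move=> u; exact: rearr_ge0.
rewrite (_ : _ `&` _ = [set u | (0 <= u)%R /\ u%:E <
    Order.min m (distrib (lam0 R) h s)]); last first.
  apply/seteqP; split => u /=.
    move=> [[[u0 um] /(rearr_gtP (lam0 R) h s u mh s0) uD] _]; split => //.
    by rewrite lt_min um.
  move=> [u0]; rewrite lt_min => /andP[um uD]; split; last by rewrite in_itv /= u0.
  by split; [split|apply/(rearr_gtP (lam0 R) h s u mh s0)].
rewrite lebIco; last by rewrite le_min m0 distrib_ge0.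
rewrite ge_min; split; last by move=> ->; rewrite orbT.
by move=> /orP[mt|//]; have := lt_le_trans tm mt; rewrite ltxx.
Qed.
Lemma distrib_chi_gen {R : realType} (m : \bar R) (H D : R -> \bar R) (s : R) :
  0 <= m -> (0 <= s)%R -> (forall u, 0 <= H u) -> 0 <= D s ->
  (forall u, s%:E < H u <-> u%:E < D s) ->
  distrib (lam0 R) (fun u => H u * (\1_(Iset m) u)%:E) s = Order.min m (D s).
Proof.
move=> m0 s0 H0 D0 HD; rewrite /distrib lam0E chiset //.
rewrite (_ : _ `&` _ = [set u | (0 <= u)%R /\ u%:E < Order.min m (D s)]).
  by rewrite lebIco // le_min m0 D0.
apply/seteqP; split => u /=.
  by move=> [[[u0 um] /HD uD] _]; split => //; rewrite lt_min um.
move=> [u0]; rewrite lt_min => /andP[um uD]; split; last by rewrite in_itv /= u0.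
by split; [split|apply/HD].
Qed.

Lemma lam0_chi {R : realType} (m : \bar R) (H : R -> \bar R) (s : R) :
  (0 <= s)%R -> (forall u, 0 <= H u) ->
  distrib (lam0 R) (fun u => H u * (\1_(Iset m) u)%:E) s =
  lebesgue_measure [set u | s%:E < `|H u * (\1_(Iset m) u)%:E|].
Proof.
move=> s0 H0; rewrite /distrib lam0E; congr (lebesgue_measure _).
rewrite chiset //; apply/seteqP; split => u; first by move=> [].
by move=> [[u0 um] us]; split => //; rewrite /= in_itv /= u0.
Qed.

Section NonAtomic.
Context {R : realType} {d : measure_display} {T : measurableType d}.
Variable mu : {measure set T -> \bar R}.
Variable sigma : T -> measurableTypeR R.
Hypothesis msig : measure_preserving_onto mu sigma.

Lemma na_distrib (u : R -> \bar R) s : measurable_fun setT u ->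
  (forall t, 0 <= u t) -> (0 <= s)%R ->
  distrib mu (fun x => u (sigma x) * (\1_(Iset (mu setT)) (sigma x))%:E) s =
  distrib (lam0 R) (fun t => u t * (\1_(Iset (mu setT)) t)%:E) s.
Proof.
move=> mu_ u0 s0; case: msig => ms _ mp.
rewrite lam0_chi //.
have mB : measurable ([set t | s%:E < `|u t * (\1_(Iset (mu setT)) t)%:E|]
    : set (measurableTypeR R)).
  exact: (@mset R _ R _ s (meas_chi (mu setT) u mu_)).
have := mp _ mB; rewrite /distrib => ->; congr (lebesgue_measure _).
rewrite chiset //; apply/seteqP; split => t; first by move=> [].
by move=> [tI tu]; split => //; split.
Qed.

End NonAtomic.
Lemma bridge {R : realType} {d : measure_display} {T : measurableType d}
  (mu : {measure set T -> \bar R}) (N : (T -> \bar R) -> \bar R)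
  (NX0 : (measurableTypeR R -> \bar R) -> \bar R) (f : T -> \bar R) :
  measurable_fun setT f ->
  (forall g : T -> \bar R, measurable_fun setT g -> N g <= 1 ->
     Xbar (mu setT) NX0 (rearr mu g) <= 1) ->
  (forall h : measurableTypeR R -> \bar R, measurable_fun setT h ->
     Xbar (mu setT) NX0 h <= 1 ->
     exists G : T -> \bar R, [/\ measurable_fun setT G, N G <= 1 &
     \int[lebesgue_measure]_(t in `[0%R, +oo[) (rearr mu f t * rearr (lam0 R) h t) <=
     \int[lebesgue_measure]_(t in `[0%R, +oo[) (rearr mu f t * rearr mu G t)]) ->
  assoc_norm mu N f = assoc_norm (lam0 R) (Xbar (mu setT) NX0) (rearr mu f).
Proof.
move=> mf H1 H2; rewrite /assoc_norm rearr_rearr //.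
apply/eqP; rewrite eq_le; apply/andP; split.
- apply/ereal_supP => _ [g [mg Ng] <-]; apply: ereal_sup_ge.
  exists (\int[lebesgue_measure]_(t in `[0%R, +oo[)
      (rearr mu f t * rearr (lam0 R) (rearr mu g) t)).
    exists (rearr mu g) => //; split; first exact: meas_rearr.
    exact: H1.
  by rewrite rearr_rearr.
- apply/ereal_supP => _ [h [mh Nh] <-]; apply: ereal_sup_ge.
  have [G [mG NG le]] := H2 h mh Nh.
  by exists (\int[lebesgue_measure]_(t in `[0%R, +oo[) (rearr mu f t * rearr mu G t))
    => //; exists G.
Qed.
Section NA2.
Context {R : realType} {d : measure_display} {T : measurableType d}.
Variable mu : {measure set T -> \bar R}.
Variables (N : (T -> \bar R) -> \bar R) (NX0 : (measurableTypeR R -> \bar R) -> \bar R).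
Variable sigma : T -> measurableTypeR R.
Hypothesis msig : measure_preserving_onto mu sigma.
Hypothesis hN : forall h, NX0 h = N (h \o sigma).
Hypothesis rinv : rearr_inv mu N.

Lemma integral_chi (f : T -> \bar R) (h : R -> \bar R) :
  measurable_fun setT f -> measurable_fun setT h ->
  \int[lebesgue_measure]_(t in `[0%R, +oo[) (rearr mu f t * rearr (lam0 R) h t) =
  \int[lebesgue_measure]_(t in `[0%R, +oo[) (rearr mu f t *
     rearr (lam0 R) (fun s => rearr (lam0 R) h s * (\1_(Iset (mu setT)) s)%:E) t).
Proof.
move=> mf mh; apply: eq_integral => t; rewrite inE /= in_itv /= andbT => t0.
have [tm|mt] := ltP t%:E (mu setT).
  by rewrite rearr_chi.
by rewrite rearr_big // !mul0e.
Qed.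

Lemma na_H1 (g : T -> \bar R) : measurable_fun setT g -> N g <= 1 ->
  Xbar (mu setT) NX0 (rearr mu g) <= 1.
Proof.
move=> mg Ng; rewrite /Xbar rearr_rearr // hN.
rewrite (rinv _ g _ mg) //.
  apply: measurableT_comp; last by case: msig.
  exact: (meas_chi (mu setT) _ (meas_rearr _ _)).
move=> t t0; congr (_ t); apply: rearr_distribE => s s0.
rewrite /comp na_distrib //; [|exact: meas_rearr|by move=> ?; exact: rearr_ge0].
rewrite (distrib_chi_gen (mu setT) (rearr mu g) (distrib mu g) s) //.
- apply/min_idPr; apply: le_measure; rewrite ?inE //; exact: mset.
- by move=> ?; exact: rearr_ge0.
- by move=> u; exact: (rearr_gtP mu g s u mg s0).
Qed.

Lemma na_H2 (f : T -> \bar R) (h : measurableTypeR R -> \bar R) :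
  measurable_fun setT f -> measurable_fun setT h ->
  Xbar (mu setT) NX0 h <= 1 ->
  exists G : T -> \bar R, [/\ measurable_fun setT G, N G <= 1 &
     \int[lebesgue_measure]_(t in `[0%R, +oo[) (rearr mu f t * rearr (lam0 R) h t) <=
     \int[lebesgue_measure]_(t in `[0%R, +oo[) (rearr mu f t * rearr mu G t)].
Proof.
move=> mf mh; rewrite /Xbar hN => Nh.
eexists; split; [|exact: Nh|].
  apply: measurableT_comp; last by case: msig.
  exact: (meas_chi (mu setT) _ (meas_rearr _ _)).
rewrite integral_chi //.
set Hc := (fun s => rearr (lam0 R) h s * (\1_(Iset (mu setT)) s)%:E).
have -> : rearr mu (Hc \o sigma) = rearr (lam0 R) Hc => //.
apply: rearr_distribE => s s0; rewrite /comp /Hc na_distrib //.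
  exact: meas_rearr.
by move=> ?; exact: rearr_ge0.
Qed.
End NA2.
Section Atomic.
Context {R : realType} {d : measure_display} {T : measurableType d}.
Variable mu : {measure set T -> \bar R}.
Variables (beta : R) (e : nat -> set T).
Hypothesis hae : atom_enum mu beta e.

Let idx : set nat := atom_index mu beta.

Lemma beta_gt0 : (0 < beta)%R.
Proof. by case: hae. Qed.

Lemma idx_down {n k} : (n <= k)%N -> idx k -> idx n.
Proof.
move=> nk; rewrite /idx /atom_index /=; apply: le_lt_trans.
by rewrite lee_fin ler_pM2l ?beta_gt0 // ler_nat.
Qed.

Lemma e_meas {n} : idx n -> measurable (e n).
Proof. by case: hae => _ H _ _ /H [[]]. Qed.

Lemma e_mu {n} : idx n -> mu (e n) = beta%:E.
Proof. by case: hae => _ H _ _ /H []. Qed.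

Lemma e_cover x : exists m, idx m /\ e m x.
Proof.
case: hae => _ _ _ cov; have : (\bigcup_(n in atom_index mu beta) e n) x.
  by rewrite cov.
by move=> [m Hm xm]; exists m.
Qed.

Lemma e_disj {n m x} : idx n -> idx m -> e n x -> e m x -> n = m.
Proof.
case: hae => _ _ tI _ hn hm xn xm; apply: tI => //; by exists x.
Qed.

Definition U k := \bigcup_(m in [set m | (m < k)%N]) e m.

Lemma U_meas k : idx k.-1 -> measurable (U k).
Proof.
move=> hk; apply: bigcup_measurable => m /= mk; apply: e_meas.
by apply: (idx_down _ hk); rewrite -ltnS; case: k mk hk.
Qed.

Lemma U_mu k : (k = 0%N \/ idx k.-1) -> mu (U k) = (beta * k%:R)%:E.
Proof.
elim: k => [|k IH] hk.
  rewrite mulr0 (_ : U 0 = set0) ?measure0 //.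
  by apply/seteqP; split => x // [].
have ik : idx k by case: hk.
have hk' : k = 0%N \/ idx k.-1.
  by case: k {IH hk} ik => [|k] ik; [left|right; apply: (idx_down _ ik)].
rewrite (_ : U k.+1 = U k `|` e k); last first.
  apply/seteqP; split => x.
    move=> [m /= mk xm]; rewrite ltnS leq_eqVlt in mk.
    case/orP: mk => [/eqP <-|mk]; [by right|by left; exists m].
  move=> [[m /= mk xm]|xk].
    by exists m => //=; exact: ltnW.
  by exists k => /=.
rewrite measureU.
- transitivity ((beta * k%:R)%:E + beta%:E).
    by congr (_ + _); [exact: IH hk'|exact: e_mu ik].
  rewrite -EFinD; congr (_%:E).
  by rewrite -nat1r mulrDr mulr1 addrC.
- by case: hk' => [->|]; [rewrite (_ : U 0 = set0) //; apply/seteqP; split => x // []|exact: U_meas].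
- exact: e_meas.
- apply/seteqP; split => x // [[m /= mk xm] xk].
  have hm : idx m by apply: (idx_down _ ik); exact: ltnW.
  by have := e_disj hm ik xm xk => mE; rewrite mE ltnn in mk.
Qed.

Lemma idx_le k : idx k -> (beta * k.+1%:R)%:E <= mu setT.
Proof.
move=> hk; rewrite -U_mu; last by right.
by apply: le_measure; rewrite ?inE //; exact: U_meas.
Qed.

Lemma find_k {t : R} : (0 <= t)%R -> t%:E < mu setT ->
  exists k, [/\ idx k, (beta * k%:R <= t)%R & (t < beta * k.+1%:R)%R].
Proof.
move=> t0 tm; have b0 := beta_gt0.
have /andP[h1 h2] := truncn_itv (divr_ge0 t0 (ltW b0)).
exists (Num.trunc (t / beta)); split.
- rewrite /idx /atom_index /=; apply: le_lt_trans tm; rewrite lee_fin.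
  by rewrite mulrC -ler_pdivlMr.
- by rewrite mulrC -ler_pdivlMr.
- by rewrite mulrC -ltr_pdivrMr.
Qed.


Lemma atom01 {A n} : measurable A -> idx n ->
  mu (A `&` e n) = 0 \/ mu (A `&` e n) = beta%:E.
Proof.
move=> mA hn; have me := e_meas hn; have mue := e_mu hn.
case: hae => _ H _ _; have [[_ _ at_] _] := H n hn.
case: (at_ (A `&` e n) (measurableI _ _ mA me) (@subIsetr _ _ _)) => [->|h0].
  by left.
right.
have Hd : mu (e n `\` A) = 0.
  rewrite -h0; congr (mu _); apply/seteqP; split => x [xn nA]; split => //.
    by move=> [].
  by move=> Ax; apply: nA.
have E : mu (e n) = mu (A `&` e n) + mu (e n `\` A).
  rewrite -measureU //.
  - congr (mu _); apply/seteqP; split => x.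
      by move=> xn; case: (pselect (A x)) => Ax; [left|right].
    by move=> [[]|[]].
  - exact: measurableI.
  - exact: measurableD.
  - by apply/seteqP; split => x // [[Ax _] [_]]; apply.
by rewrite -mue E Hd adde0.
Qed.

Lemma mu_decomp {A} : measurable A ->
  mu A = \sum_(i <oo | i \in idx) mu (A `&` e i).
Proof.
move=> mA; rewrite -measure_bigcup.
- congr (mu _); apply/seteqP; split => x.
    move=> Ax; have [m [hm xm]] := e_cover x; by exists m.
  by move=> [m _ []].
- by move=> i hi; apply: measurableI => //; exact: e_meas.
- case: hae => _ _ tI _ i j hi hj [x [[_ xi] [_ xj]]].
  by apply: tI => //; exists x.
Qed.

Lemma psum_beta {A} M : measurable A ->
  exists j : nat, \sum_(0 <= i < M | i \in idx) mu (A `&` e i) = (beta * j%:R)%:E.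
Proof.
move=> mA; elim: M => [|M [j IH]].
  by exists 0%N; rewrite big_geq // mulr0.
rewrite big_mkcond big_nat_recr //= -big_mkcond IH.
case: ifPn => [/set_mem hM|_]; last by exists j; rewrite adde0.
case: (atom01 mA hM) => ->; first by exists j; rewrite adde0.
exists j.+1; rewrite -EFinD; congr (_%:E).
by rewrite -addn1 natrD mulrDr mulr1.
Qed.

Lemma step {A} k : measurable A ->
  ~ ((beta * k%:R)%:E < mu A /\ mu A < (beta * k.+1%:R)%:E).
Proof.
move=> mA [h1 h2]; rewrite (mu_decomp mA) in h1 h2.
have b0 := beta_gt0.
have u0 : forall n, (0 <= n)%N -> n \in idx -> 0 <= mu (A `&` e n).
  by move=> *; exact: measure_ge0.
have [M HM] : exists M, (beta * k%:R)%:E <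
    \sum_(0 <= i < M | i \in idx) mu (A `&` e i).
  apply/not_existsP => H.
  have : \sum_(i <oo | i \in idx) mu (A `&` e i) <= (beta * k%:R)%:E.
    apply: lime_le; first exact: is_cvg_nneseries.
    by apply: nearW => n /=; rewrite leNgt; apply/negP; exact: H.
  by rewrite leNgt h1.
have [j Ej] := psum_beta M mA.
rewrite Ej lte_fin ltr_pM2l // ltr_nat in HM.
have := nneseries_lim_ge M u0; rewrite Ej => H.
have := lt_le_trans (le_lt_trans H h2) (lexx _).
by rewrite lte_fin ltr_pM2l // ltr_nat ltnS leqNgt HM.
Qed.

Lemma rearr_step (g : T -> \bar R) k (t : R) : measurable_fun setT g ->
  (beta * k%:R <= t)%R -> (t < beta * k.+1%:R)%R ->
  rearr mu g t = rearr mu g (beta * k%:R).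
Proof.
move=> mg h1 h2.
suff HH : forall s, (0 <= s)%R ->
    (distrib mu g s <= t%:E <-> distrib mu g s <= (beta * k%:R)%:E).
  rewrite /rearr; congr ereal_inf.
  by apply/seteqP; split => _ [s [s0 Ds] <-]; exists s => //; split => //;
    apply/HH.
move=> s s0; split => H; last first.
  by apply: (le_trans H); rewrite lee_fin.
rewrite leNgt; apply/negP => H'.
apply: (step k (mset g s mg)); split => //.
by apply: (le_lt_trans H); rewrite lte_fin.
Qed.

Definition av (h : measurableTypeR R -> \bar R) n :=
  (beta^-1)%:E * \int[lebesgue_measure]_(t in `[(beta * n%:R)%R, (beta * n.+1%:R)%R])
     rearr (lam0 R) (fun s => h s * (\1_(Iset (mu setT)) s)%:E) t.

Lemma av_ge0 h n : 0 <= av h n.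
Proof.
apply: mule_ge0; first by rewrite lee_fin invr_ge0 ltW // beta_gt0.
by apply: integral_ge0 => t _; exact: rearr_ge0.
Qed.

Lemma Tmap_val {h x m} : idx m -> e m x -> Tmap mu beta e h x = av h m.
Proof.
move=> hm xm; rewrite /Tmap (@nneseriesD1 _ _ m).
- rewrite eseries0 ?adde0; last first.
    move=> i _ /andP[/asboolP hi im]; rewrite indicE.
    case: (boolP (x \in e i)) => [/set_mem xi|]; last by rewrite mul0e.
    by have := e_disj hi hm xi xm => ie; rewrite ie eqxx in im.
  by rewrite indicE mem_set // mul1e.
- by move=> k _; apply: mule_ge0; [rewrite lee_fin indicE ler0n|exact: av_ge0].
- exact/asboolP.
Qed.

Lemma Tmap_ge0 h x : 0 <= Tmap mu beta e h x.
Proof. by have [m [hm xm]] := e_cover x; rewrite (Tmap_val hm xm) av_ge0. Qed.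

Lemma Tmap_meas h : measurable_fun setT (Tmap mu beta e h).
Proof.
move=> _ B mB; rewrite setTI.
rewrite (_ : _ @^-1` _ = \bigcup_(m in [set m | idx m /\ B (av h m)]) e m).
  by apply: bigcup_measurable => m [hm _]; exact: e_meas.
apply/seteqP; split => x /=.
  by have [m [hm xm]] := e_cover x; rewrite (Tmap_val hm xm) => Bx; exists m.
by move=> [m [hm Bm] xm]; rewrite (Tmap_val hm xm).
Qed.

Lemma inf_ge (c : \bar R) : 0 <= c ->
  ereal_inf [set s%:E | s in [set s : R | (0 <= s)%R /\ c <= s%:E]] = c.
Proof.
case: c => [r| |] // c0.
- apply/eqP; rewrite eq_le; apply/andP; split.
    by apply: ge_ereal_inf; exists r%:E => //; exists r => //; split => //; rewrite -lee_fin.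
  by apply/ereal_infP => _ [s [_ cs] <-].
- rewrite (_ : [set _ | _ in _] = set0) ?ereal_inf0 //.
  by apply/seteqP; split => x // [s [_]]; rewrite leNgt ltry.
Qed.

Lemma Tmap_rearr h k (t : R) :
  (forall n m, (n <= m)%N -> idx m -> av h m <= av h n) -> idx k ->
  (beta * k%:R <= t)%R -> (t < beta * k.+1%:R)%R ->
  rearr mu (Tmap mu beta e h) t = av h k.
Proof.
move=> avni hk h1 h2.
have mG := Tmap_meas h.
suff HH : forall s, (0 <= s)%R ->
    (distrib mu (Tmap mu beta e h) s <= t%:E <-> av h k <= s%:E).
  rewrite -[RHS](@inf_ge _ (av_ge0 h k)) /rearr; congr ereal_inf.
  by apply/seteqP; split => _ [s [s0 Ds] <-]; exists s => //; split => //;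
    apply/HH.
move=> s s0; split => H.
- rewrite leNgt; apply/negP => sa.
  have hk1 : k.+1 = 0%N \/ idx k.+1.-1 by right.
  have : mu (U k.+1) <= distrib mu (Tmap mu beta e h) s.
    apply: le_measure; rewrite ?inE; first exact: U_meas.
      exact: mset.
    move=> x [m /= mk xm]; have hm : idx m by apply: (idx_down _ hk).
    rewrite (Tmap_val hm xm) gee0_abs ?av_ge0 //.
    by apply: (lt_le_trans sa); apply: avni.
  rewrite U_mu // => H'; have := le_trans H' H.
  by rewrite lee_fin leNgt h2.
- apply: (@le_trans _ _ (mu (U k))).
    apply: le_measure; rewrite ?inE; first exact: mset.
      apply: U_meas; apply: (idx_down _ hk); exact: leq_pred.
    move=> x /=; have [m [hm xm]] := e_cover x.
    rewrite (Tmap_val hm xm) gee0_abs ?av_ge0 // => sx.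
    exists m => //=; rewrite ltnNge; apply/negP => km.
    by have := le_trans (avni _ _ km hm) H; rewrite leNgt sx.
  rewrite U_mu ?lee_fin //.
  by case: k hk {h1 h2 H} => [|k] hk; [left|right; apply: (idx_down _ hk)].
Qed.

Lemma chi2 (I : set R) (s : R) :
  (\1_I s)%:E * (\1_I s)%:E = (\1_I s)%:E :> \bar R.
Proof. by rewrite indicE; case: (s \in I); rewrite ?mul1e ?mul0e. Qed.

Lemma leb_int n :
  lebesgue_measure (`[(beta * n%:R)%R, (beta * n.+1%:R)%R[ : set R) = beta%:E.
Proof.
have b0 := beta_gt0.
rewrite lebesgue_measure_itv /= lte_fin ltr_pM2l // ltr_nat ltnSn.
rewrite -EFinD; congr (_%:E).
by rewrite -addn1 natrD mulrDr mulr1 addrAC subrr add0r.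
Qed.

Lemma int_step (phi : R -> \bar R) n c : measurable_fun setT phi ->
  (forall t, (beta * n%:R <= t)%R -> (t < beta * n.+1%:R)%R -> phi t = c) ->
  \int[lebesgue_measure]_(t in `[(beta * n%:R)%R, (beta * n.+1%:R)%R]) phi t =
  c * beta%:E.
Proof.
move=> mphi Hc; rewrite -integral_itv_bndo_bndc; last exact: measurable_funTS.
rewrite (eq_integral (fun=> c)); last first.
  by move=> t; rewrite inE /= in_itv /= => /andP[t1 t2]; apply: Hc.
by rewrite integral_cst //= leb_int.
Qed.

Lemma av_rearr (g : T -> \bar R) n : measurable_fun setT g -> idx n ->
  av (fun t => rearr mu g t * (\1_(Iset (mu setT)) t)%:E) n = rearr mu g (beta * n%:R).
Proof.
move=> mg hn; have b0 := beta_gt0.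
rewrite /av (@int_step _ n (rearr mu g (beta * n%:R))).
- by rewrite muleC -muleA -EFinM mulfV ?gt_eqF // mule1.
- exact: meas_rearr.
- move=> t t1 t2.
  have t0 : (0 <= t)%R by apply: le_trans t1; rewrite mulr_ge0 // ltW.
  have tm : t%:E < mu setT.
    apply: (@lt_le_trans _ _ (beta * n.+1%:R)%:E); last exact: idx_le.
    by rewrite lte_fin.
  rewrite (_ : (fun s => _) = (fun s => rearr (lam0 R) (rearr mu g) s *
     (\1_(Iset (mu setT)) s)%:E)); last first.
    by apply/funext => s; rewrite -muleA chi2 rearr_rearr.
  rewrite rearr_chi ?rearr_rearr ?(rearr_step g n t mg t1 t2) //.
  exact: meas_rearr.
Qed.

Variables (N : (T -> \bar R) -> \bar R) (NX0 : (measurableTypeR R -> \bar R) -> \bar R).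
Hypothesis hN : forall h, NX0 h = N (Tmap mu beta e h).
Hypothesis rinv : rearr_inv mu N.

Lemma at_H1 (g : T -> \bar R) : measurable_fun setT g -> N g <= 1 ->
  Xbar (mu setT) NX0 (rearr mu g) <= 1.
Proof.
move=> mg Ng; rewrite /Xbar rearr_rearr // hN.
set u := (fun t => rearr mu g t * (\1_(Iset (mu setT)) t)%:E).
rewrite (rinv _ g (Tmap_meas u) mg) // => t t0.
have [tm|mt] := ltP t%:E (mu setT); last first.
  by rewrite !rearr_big //; exact: Tmap_meas.
have [k [hk h1 h2]] := find_k t0 tm.
rewrite (Tmap_rearr u k t _ hk h1 h2).
  have -> : av u k = rearr mu g (beta * k%:R) := av_rearr g k mg hk.
  by rewrite (rearr_step g k t mg h1 h2).
move=> n m nm hm; have hn := idx_down nm hm.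
have -> : av u m = rearr mu g (beta * m%:R) := av_rearr g m mg hm.
have -> : av u n = rearr mu g (beta * n%:R) := av_rearr g n mg hn.
by apply: rearr_nonincr; rewrite ler_pM2l ?beta_gt0 // ler_nat.
Qed.

Definition Ik k : set R := `[(beta * k%:R)%R, (beta * k.+1%:R)%R[%classic.

Lemma Icover : (`[0%R, +oo[%classic : set R) = \bigcup_k Ik k.
Proof.
have b0 := beta_gt0.
apply/seteqP; split => t /=.
  rewrite in_itv /= andbT => t0.
  have /andP[h1 h2] := truncn_itv (divr_ge0 t0 (ltW b0)).
  exists (Num.trunc (t / beta)) => //; rewrite /Ik /= in_itv /=.
  by rewrite mulrC -ler_pdivlMr // h1 /= mulrC -ltr_pdivrMr.
move=> [k _]; rewrite /Ik /= !in_itv /= andbT => /andP[h1 _].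
by apply: le_trans h1; rewrite mulr_ge0 // ltW.
Qed.

Lemma Idisj : trivIset setT Ik.
Proof.
have b0 := beta_gt0.
move=> i j _ _ [t []]; rewrite /Ik /= !in_itv /= => /andP[i1 i2] /andP[j1 j2].
case: (ltngtP i j) => // ij.
  have := le_lt_trans j1 i2; rewrite ltr_pM2l // ltr_nat ltnS leqNgt ij //.
have := le_lt_trans i1 j2; rewrite ltr_pM2l // ltr_nat ltnS leqNgt ij //.
Qed.

Lemma DEC (phi : R -> \bar R) : measurable_fun setT phi -> (forall t, 0 <= phi t) ->
  \int[lebesgue_measure]_(t in `[0%R, +oo[) phi t =
  \sum_(k <oo) \int[lebesgue_measure]_(t in Ik k) phi t.
Proof.
move=> mphi phi0; rewrite Icover ge0_integral_bigcup //.
- by move=> k; exact: measurable_itv.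
- exact: measurable_funTS.
- exact: Idisj.
Qed.

Lemma leb_intc n :
  lebesgue_measure (`[(beta * n%:R)%R, (beta * n.+1%:R)%R] : set R) = beta%:E.
Proof.
have b0 := beta_gt0.
rewrite lebesgue_measure_itv /= lte_fin ltr_pM2l // ltr_nat ltnSn.
rewrite -EFinD; congr (_%:E).
by rewrite -addn1 natrD mulrDr mulr1 addrAC subrr add0r.
Qed.

Lemma at_H2 (f : T -> \bar R) (h : measurableTypeR R -> \bar R) :
  measurable_fun setT f -> measurable_fun setT h ->
  Xbar (mu setT) NX0 h <= 1 ->
  exists G : T -> \bar R, [/\ measurable_fun setT G, N G <= 1 &
     \int[lebesgue_measure]_(t in `[0%R, +oo[) (rearr mu f t * rearr (lam0 R) h t) <=
     \int[lebesgue_measure]_(t in `[0%R, +oo[) (rearr mu f t * rearr mu G t)].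
Proof.
move=> mf mh; rewrite /Xbar hN => Nh.
have b0 := beta_gt0.
set Hc := (fun t => rearr (lam0 R) h t * (\1_(Iset (mu setT)) t)%:E).
exists (Tmap mu beta e Hc); split => //; first exact: Tmap_meas.
rewrite (integral_chi mu f h mf mh) -/Hc.
set H' := rearr (lam0 R) Hc.
have H'0 t : 0 <= H' t by exact: rearr_ge0.
have mH' : measurable_fun setT H' by exact: meas_rearr.
have avE n : av Hc n = (beta^-1)%:E *
    \int[lebesgue_measure]_(t in `[(beta * n%:R)%R, (beta * n.+1%:R)%R]) H' t.
  rewrite /av; congr (_ * _); congr (integral _ _ _); apply/funext => t.
  by congr (rearr _ _ t); apply/funext => s; rewrite /Hc -muleA chi2.
have intle n c : (forall t, (beta * n%:R <= t)%R -> (t <= beta * n.+1%:R)%R -> H' t <= c) ->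
    \int[lebesgue_measure]_(t in `[(beta * n%:R)%R, (beta * n.+1%:R)%R]) H' t <= c * beta%:E.
  move=> Hle; rewrite -(leb_intc n) -integral_cst; last exact: measurable_itv.
  apply: ge0_le_integral => //; first exact: measurable_funTS.
  by move=> t; rewrite /= in_itv /= => /andP[t1 t2]; apply: Hle.
have intge n c : 0 <= c -> (forall t, (beta * n%:R <= t)%R -> (t <= beta * n.+1%:R)%R -> c <= H' t) ->
    c * beta%:E <= \int[lebesgue_measure]_(t in `[(beta * n%:R)%R, (beta * n.+1%:R)%R]) H' t.
  move=> c0 Hle; rewrite -(leb_intc n) -integral_cst; last exact: measurable_itv.
  apply: ge0_le_integral => //; first exact: measurable_funTS.
  by move=> t; rewrite /= in_itv /= => /andP[t1 t2]; apply: Hle.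
have avni1 n : av Hc n.+1 <= av Hc n.
  rewrite !avE; apply: lee_wpmul2l; first by rewrite lee_fin invr_ge0 ltW.
  apply: (le_trans (intle n.+1 (H' (beta * n.+1%:R)%R) _)).
    by move=> t t1 _; apply: rearr_nonincr.
  by apply: intge => // t _ t2; apply: rearr_nonincr.
have avni n m : (n <= m)%N -> idx m -> av Hc m <= av Hc n.
  move=> nm _; elim: m nm => [|m IH]; first by rewrite leqn0 => /eqP ->.
  rewrite leq_eqVlt => /orP[/eqP -> //|]; rewrite ltnS => nm.
  exact: le_trans (avni1 m) (IH nm).
set F := rearr mu f.
have F0 t : 0 <= F t by exact: rearr_ge0.
rewrite le_eqVlt; apply/orP; left; apply/eqP.
rewrite !DEC.
all: try (by move=> t; apply: mule_ge0 => //; exact: rearr_ge0).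
all: try (by apply: emeasurable_funM => //; exact: meas_rearr).
apply: eq_eseriesr => k _.
have inIk t : t \in Ik k -> (beta * k%:R <= t)%R /\ (t < beta * k.+1%:R)%R.
  by rewrite inE /Ik /= in_itv /= => /andP[].
case: (pselect (idx k)) => hk; last first.
  apply: eq_integral => t /inIk [t1 t2].
  rewrite /F rearr_big ?mul0e //; apply: (le_trans _ (_ : (beta * k%:R)%:E <= t%:E)).
    by rewrite leNgt; apply/negP.
  by rewrite lee_fin.
have -> : \int[lebesgue_measure]_(t in Ik k) (F t * H' t) =
    \int[lebesgue_measure]_(t in Ik k) (F (beta * k%:R)%R * H' t).
  by apply: eq_integral => t /inIk [t1 t2]; rewrite /F (rearr_step f k t mf t1 t2).
have -> : \int[lebesgue_measure]_(t in Ik k) (F t * rearr mu (Tmap mu beta e Hc) t) =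
    \int[lebesgue_measure]_(t in Ik k) (cst (F (beta * k%:R)%R * av Hc k) t).
  by apply: eq_integral => t /inIk [t1 t2]; rewrite /F (rearr_step f k t mf t1 t2)
    (Tmap_rearr Hc k t avni hk t1 t2).
rewrite ge0_integralZl //; last exact: measurable_funTS.
rewrite integral_cst; last exact: measurable_itv.
rewrite (_ : _ (Ik k) = beta%:E); last exact: leb_int.
rewrite /Ik integral_itv_bndo_bndc; last exact: measurable_funTS.
rewrite avE -!muleA; congr (_ * _).
  by rewrite [X in _ * X]muleC muleA -EFinM mulVf ?gt_eqF // mul1e.
exact: measurable_itv.
Qed.
End Atomic.

Theorem mainTheorem5 (R : realType) (d : measure_display) (T : measurableType d)
    (mu : {measure set T -> \bar R})
    (N : (T -> \bar R) -> \bar R)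
    (NX0 : (measurableTypeR R -> \bar R) -> \bar R) :
  sigma_finite setT mu ->
  resonant mu ->
  qBFN mu N -> rearr_inv mu N -> P5 mu N ->
  is_Xbar0 mu N NX0 ->
  forall f : T -> \bar R, measurable_fun setT f ->
    assoc_norm mu N f = assoc_norm (lam0 R) (Xbar (mu setT) NX0) (rearr mu f).
Proof.
move=> _ _ _ rinv _ hX f mf.
case: hX => [[_ [sigma [msig hN]]] | [beta [e [hae hN]]]].
- apply: bridge => //.
    by move=> g mg Ng; exact: (@na_H1 _ _ _ mu N NX0 sigma msig hN rinv g mg Ng).
  by move=> h mh Nh; exact: (@na_H2 _ _ _ mu N NX0 sigma msig hN f h mf mh Nh).
- apply: bridge => //.
    by move=> g mg Ng; exact: (@at_H1 _ _ _ mu beta e hae N NX0 hN rinv g mg Ng).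
  by move=> h mh Nh; exact: (@at_H2 _ _ _ mu beta e hae N NX0 hN f h mf mh Nh).
Qed.
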